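(* Let $n,k,\gamma$ be positive integers with $k\ge3\lceil\gamma/2\rceil$ and $n\ge2k+\gamma$. Then $$B_2(n,k,k+\gamma;3)\ge 2^{\left\lfloor\frac{n-2k+1}{k+1}\right\rfloor\left\lfloor\frac{k}{\lceil\gamma/2\rceil}\right\rfloor}.$$
   Context: For a prime power $q$, $\mathcal{G}_q(n,k)$ denotes the set of all $k$-dimensional subspaces of $\mathbb{F}_q^n$. An $\alpha$-$(n,k,\delta)_q^c$ covering Grassmannian code is a subset $\mathcal{C}\subseteq\mathcal{G}_q(n,k)$ (no repeated codewords) such that every set of $\alpha$ distinct codewords of $\mathcal{C}$ spans a subspace of $\mathbb{F}_q^n$ of dimension at least $k+\delta$. $B_q(n,k,\delta;\alpha)$ denotes the maximum size of an $\alpha$-$(n,k,\delta)_q^c$ code. *)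

(* Defs.v *)
From mathcomp Require Import all_boot all_algebra.
Set Implicit Arguments. Unset Strict Implicit. Unset Printing Implicit Defensive.
Import GRing.Theory.
Local Open Scope ring_scope.

(* Subspaces of F_q^n are {vspace 'rV[F]_n} (vector.v); G_q(n,k) = those of dimension k. *)

Definition is_cov3_code (F : fieldType) (n k delta : nat)
  (C : seq {vspace 'rV[F]_n}) : Prop :=
  uniq C /\
  (forall U, U \in C -> \dim U = k) /\
  (forall U V W, U \in C -> V \in C -> W \in C ->
     U != V -> V != W -> U != W ->
     (k + delta <= \dim (U + V + W)%VS)%N).

(* "B_q(n,k,delta;3) >= N" : there is such a code with at least N codewords
   (B is the maximum size, the set of codes being finite). *)
Definition B3_ge (F : fieldType) (n k delta N : nat) : Prop :=
  exists C : seq {vspace 'rV[F]_n}, @is_cov3_code F n k delta C /\ (N <= size C)%N.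

(* Main.v *)
Require Import Defs.
From HB Require Import structures.
From mathcomp Require Import all_boot all_algebra.
From mathcomp Require Import zify ring.
Set Implicit Arguments. Unset Strict Implicit. Unset Printing Implicit Defensive.
Import GRing.Theory.
Local Open Scope ring_scope.

Local Notation F := 'F_2.

Lemma F2_cases (x : F) : x = 0 \/ x = 1.
Proof. by case: x => [[|[|m]]] //= Hm; [left|right]; apply/val_inj. Qed.

Lemma F2_addxx (x : F) : x + x = 0.
Proof. by case: (F2_cases x) => ->; apply/val_inj. Qed.

Lemma polyF2_addxx (p : {poly F}) : p + p = 0.
Proof. by apply/polyP => i; rewrite coefD F2_addxx coef0. Qed.

Lemma polyF2_opp (p : {poly F}) : - p = p.
Proof. by rewrite -[LHS]addr0 -(polyF2_addxx p) addrA addNr add0r. Qed.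

Lemma coef_compXn_mul c (p : {poly F}) i : (0 < c)%N -> (p \Po 'X^c)`_(c * i) = p`_i.
Proof. by move=> hc; rewrite coef_comp_poly_Xn // dvdn_mulr // mulKn. Qed.

Lemma compXn_neq0 c (p : {poly F}) : (0 < c)%N -> p != 0 -> p \Po 'X^c != 0.
Proof.
move=> hc pn0; apply/eqP => E.
have := coef_compXn_mul p (size p).-1 hc; rewrite E coef0 => /esym/eqP.
by rewrite -lead_coefE lead_coef_eq0 (negbTE pn0).
Qed.

Lemma size_compXn c (p : {poly F}) : (0 < c)%N -> p != 0 -> size (p \Po 'X^c) = ((size p).-1 * c).+1.
Proof.
move=> hc pn0; have := size_comp_poly p 'X^c; rewrite size_polyXn /=.
move=> <-; rewrite prednK // lt0n size_poly_eq0; exact: compXn_neq0.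
Qed.

Lemma F2_det (a0 a1 b0 b1 x y : F) :
  (a0 != 0) || (a1 != 0) -> (b0 != 0) || (b1 != 0) -> (a0 != b0) || (a1 != b1) ->
  x * a0 + y * a1 = 0 -> x * b0 + y * b1 = 0 -> x = 0 /\ y = 0.
Proof.
case: (F2_cases a0) => ->; case: (F2_cases a1) => ->; case: (F2_cases b0) => ->;
case: (F2_cases b1) => ->; case: (F2_cases x) => ->; case: (F2_cases y) => ->;
rewrite ?eqxx ?oner_eq0 ?mulr0 ?mulr1 ?add0r ?addr0 ?F2_addxx //=;
move=> *; exfalso; by [move/eqP: (oner_neq0 F)|].
Qed.

Lemma poly_dec2 (q : {poly F}) :
  q = (q`_0)%:P + q`_1 *: 'X + 'X^2 * \poly_(i < size q) q`_i.+2.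
Proof.
apply/polyP => i; rewrite !coefD coefC coefZ coefX coefXnM coef_poly.
case: i => [|[|i]] /=; rewrite ?mulr0 ?mulr1 ?addr0 ?add0r //.
rewrite subn2 /=; case: ltnP => // hi; rewrite nth_default //; lia.
Qed.

Lemma coef_mulcomp c (t q : {poly F}) r : (0 < c)%N -> (r < c)%N ->
  (t * (q \Po 'X^c))`_(c + r) = t`_(c + r) * q`_0 + t`_r * q`_1.
Proof.
move=> hc hr; rewrite [q in q \Po _]poly_dec2 !comp_polyD comp_polyC comp_polyZ comp_polyM.
rewrite comp_polyX comp_Xn_poly -exprM !mulrDr !coefD coefMC.
rewrite -scalerAr coefZ coefMXn ltnNge leq_addr /= addKn.
rewrite mulrCA coefXnM ifT; last by lia.
by rewrite addr0 [q`_1 * _]mulrC.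
Qed.

Lemma size_bound c k (t u : {poly F}) : (0 < c)%N -> u != 0 ->
  (size ((t * (u \Po 'X^c))%R) <= k + c)%N -> (size t <= k + c - (size u).-1 * c)%N.
Proof.
move=> hc un0; have [->|tn0] := eqVneq t 0; first by rewrite size_poly0.
rewrite size_mul ?compXn_neq0 // size_compXn // addnS /=.
move: ((size u).-1 * c)%N => m h; rewrite -(leq_add2r m) subnK // (leq_trans _ h) // leq_addl. all: exact: isT.
Qed.

Lemma cop_coef0 (a b : {poly F}) : coprimep a b -> a`_0 = 0 -> b`_0 = 0 -> False.
Proof.
move=> cab a0 b0.
have Xa : 'X %| a by rewrite -[X in X %| _]subr0 -polyC0 dvdp_XsubCl /root horner_coef0 a0.
have Xb : 'X %| b by rewrite -[X in X %| _]subr0 -polyC0 dvdp_XsubCl /root horner_coef0 b0.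
have := coprimep_dvdr Xa (coprimep_dvdl Xb cab).
by rewrite coprimepp size_polyX.
Qed.

Lemma poly_size2 (u : {poly F}) : (size u <= 2)%N -> u = (u`_0)%:P + u`_1 *: 'X.
Proof.
move=> hs; apply/polyP => i; rewrite coefD coefC coefZ coefX.
case: i => [|[|i]] /=; rewrite ?mulr0 ?mulr1 ?addr0 ?add0r //.
by rewrite nth_default // (leq_trans hs).
Qed.

Lemma ar_big st m k c : (3 * c <= m)%N -> (st <= k + c - m)%N -> (st <= k - 2 * c)%N.
Proof. lia. Qed.
Lemma ar_mid st m k c : (2 * c <= m)%N -> (st <= k + c - m)%N -> (st <= k - c)%N.
Proof. lia. Qed.
Lemma ar_mul a s c : (a < s)%N -> (a * c <= s.-1 * c)%N.
Proof. by move=> h; rewrite leq_mul2r; apply/orP; right; lia. Qed.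
Lemma ar_lt r c k : (r < c)%N -> (3 * c <= k)%N -> (r < k - 2 * c)%N.
Proof. lia. Qed.
Lemma ar_sub2 i c : (c <= i)%N -> (i < c + c)%N -> (i - c < c)%N.
Proof. lia. Qed.
Lemma ar_h3 i c k : (c + c <= i)%N -> (i < k - c)%N -> (c <= i - c)%N && (i - c < k - 2 * c)%N.
Proof. lia. Qed.
Lemma ar_le2 m : (m <= 3)%N -> m != 3 -> (m <= 2)%N.
Proof. lia. Qed.
Lemma ar_pred1 s : (1 < s)%N -> (s <= 2)%N -> s.-1 = 1%N.
Proof. lia. Qed.
Lemma ar_last i c k : (c + c <= i)%N -> (i < k)%N -> (i - c - c < k - 2 * c)%N /\ (i - c - c + c + c = i)%N.
Proof. lia. Qed.

Definition sel c (p1 q1 : {poly F}) (j : nat) : nat :=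
  if (3 < maxn (size p1) (size q1))%N then j
  else if maxn (size p1) (size q1) == 3 then (if (j < c)%N then j else j + c)%N
  else (j + c + c)%N.

Lemma key k c (p q f f' : {poly F}) :
  (0 < c)%N -> (3 * c <= k)%N -> p != 0 -> q != 0 -> p != q ->
  (size f <= k + c)%N -> (size f' <= k + c)%N ->
  (forall r, (r < c)%N -> f`_(c + r) = 0) -> (forall r, (r < c)%N -> f'`_(c + r) = 0) ->
  f * (p \Po 'X^c) = f' * (q \Po 'X^c) ->
  (forall j, (j < k - 2 * c)%N ->
     ((f + f') %/ ((p %/ gcdp p q + q %/ gcdp p q) \Po 'X^c))`_(sel c (p %/ gcdp p q) (q %/ gcdp p q) j) = 0) ->
  f = 0 /\ f' = 0.
Proof.
move=> hc hk pn0 qn0 pq sf sf' gf gf' E H.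
have cop : coprimep (p %/ gcdp p q) (q %/ gcdp p q) by apply: coprimep_div_gcd; rewrite pn0.
have dn0 : gcdp p q != 0 by rewrite gcdp_eq0 negb_and pn0.
have hp : p = p %/ gcdp p q * gcdp p q by rewrite divpK // dvdp_gcdl.
have hq : q = q %/ gcdp p q * gcdp p q by rewrite divpK // dvdp_gcdr.
move: cop H hp hq; set d := gcdp p q; set p1 := p %/ d; set q1 := q %/ d => cop H hp hq.
have p1n0 : p1 != 0 by apply: contraNneq pn0 => e; rewrite hp e mul0r.
have q1n0 : q1 != 0 by apply: contraNneq qn0 => e; rewrite hq e mul0r.
have p1q1 : p1 != q1 by apply: contraNneq pq => e; rewrite hp hq e.
have Dn0 : d \Po 'X^c != 0 := compXn_neq0 hc dn0.
set P1 := p1 \Po 'X^c; set Q1 := q1 \Po 'X^c.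
have E1 : f * P1 = f' * Q1.
  by apply: (mulIf Dn0); rewrite /P1 /Q1 -!mulrA -!comp_polyM -hp -hq.
have P1n0 : P1 != 0 := compXn_neq0 hc p1n0.
have Q1n0 : Q1 != 0 := compXn_neq0 hc q1n0.
have copQP : coprimep Q1 P1 by apply: coprimep_comp_poly; rewrite coprimep_sym.
have dvd : Q1 %| f by rewrite -(Gauss_dvdpl _ copQP) E1 dvdp_mull.
set t := f %/ Q1.
have hf : f = t * Q1 by rewrite divpK.
have hf' : f' = t * P1 by apply: (mulIf Q1n0); rewrite -E1 {1}hf mulrAC.
have Rn0 : (p1 + q1) \Po 'X^c != 0.
  apply: compXn_neq0 => //; apply: contraNneq p1q1 => /eqP; by rewrite addr_eq0 polyF2_opp.
have ht : (f + f') %/ ((p1 + q1) \Po 'X^c) = t.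
  by rewrite comp_polyD -/P1 -/Q1 {1}hf hf' -mulrDr [Q1 + P1]addrC mulpK // -comp_polyD.
rewrite ht in H.
suff t0 : t = 0 by rewrite hf hf' t0 !mul0r.
have st1 : (size t <= k + c - (size q1).-1 * c)%N by apply: size_bound => //; rewrite -/Q1 -hf.
have st2 : (size t <= k + c - (size p1).-1 * c)%N by apply: size_bound => //; rewrite -/P1 -hf'.
have C1 r : (r < c)%N -> t`_(c + r) * q1`_0 + t`_r * q1`_1 = 0.
  by move=> hr; rewrite -coef_mulcomp // -/Q1 -hf gf.
have C2 r : (r < c)%N -> t`_(c + r) * p1`_0 + t`_r * p1`_1 = 0.
  by move=> hr; rewrite -coef_mulcomp // -/P1 -hf' gf'.
apply/polyP => i; rewrite coef0.
case: (ltnP 3 (maxn (size p1) (size q1))) => hM.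
  have Hs j : (j < k - 2 * c)%N -> t`_j = 0 by move=> hj; have := H j hj; rewrite /sel hM.
  have st : (size t <= k - 2 * c)%N.
    move: hM; rewrite leq_max => /orP[h|h].
      exact: ar_big (ar_mul c h) st2.
    exact: ar_big (ar_mul c h) st1.
  case: (ltnP i (k - 2 * c)) => hi; first exact: Hs.
  by apply: nth_default; apply: leq_trans st hi.
case: (eqVneq (maxn (size p1) (size q1)) 3) => hM3.
  have Hs j : (j < k - 2 * c)%N -> t`_(if (j < c)%N then j else j + c)%N = 0.
    by move=> hj; have := H j hj; rewrite /sel ltnNge hM /= hM3 eqxx.
  have st : (size t <= k - c)%N.
    have : (3 <= maxn (size p1) (size q1))%N by rewrite hM3.
    rewrite leq_max => /orP[h|h].
      exact: ar_mid (ar_mul c h) st2.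
    exact: ar_mid (ar_mul c h) st1.
  have [u0 [u1 [u0n0 Cu]]] : exists u0 u1 : F, u0 != 0 /\
      forall r, (r < c)%N -> t`_(c + r) * u0 + t`_r * u1 = 0.
    case: (eqVneq (q1`_0) 0) => q0; last by exists q1`_0, q1`_1.
    case: (eqVneq (p1`_0) 0) => p0; last by exists p1`_0, p1`_1.
    by case: (cop_coef0 cop p0 q0).
  have low r : (r < c)%N -> t`_r = 0.
    by move=> hr; have := Hs r (ar_lt hr hk); rewrite hr.
  have mid r : (r < c)%N -> t`_(c + r) = 0.
    move=> hr; have := Cu r hr; rewrite (low r hr) mul0r addr0 => /eqP.
    by rewrite mulf_eq0 (negbTE u0n0) orbF => /eqP.
  case: (ltnP i c) => h1; first exact: low.
  case: (ltnP i (c + c)) => h2.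
    by rewrite -(subnKC h1); apply: mid; apply: ar_sub2.
  case: (ltnP i (k - c)) => h3.
    case/andP: (ar_h3 h2 h3) => a1 a2.
    by have := Hs (i - c)%N a2; rewrite ltnNge a1 /= subnK // (leq_trans _ h1).
  by apply: nth_default; apply: leq_trans st h3.
have hM2 : (maxn (size p1) (size q1) <= 2)%N by apply: ar_le2.
have sp1 : (size p1 <= 2)%N by apply: leq_trans hM2; apply: leq_maxl.
have sq1 : (size q1 <= 2)%N by apply: leq_trans hM2; apply: leq_maxr.
have dp1 := poly_size2 sp1; have dq1 := poly_size2 sq1.
have Hs j : (j < k - 2 * c)%N -> t`_(j + c + c) = 0.
  by move=> hj; have := H j hj; rewrite /sel ltnNge hM /= (negbTE hM3).
have st : (size t <= k)%N.
  have [h|h] : (1 < size p1)%N \/ (1 < size q1)%N.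
    case: (ltnP 1 (size p1)) => h1; first by left.
    case: (ltnP 1 (size q1)) => h2; first by right.
    exfalso.
    have p0 : p1`_0 != 0.
      by apply: contraNneq p1n0 => e; rewrite dp1 e (nth_default 0 h1) scale0r addr0.
    have q0 : q1`_0 != 0.
      by apply: contraNneq q1n0 => e; rewrite dq1 e (nth_default 0 h2) scale0r addr0.
    move: p1q1; rewrite dp1 dq1 (nth_default 0 h1) (nth_default 0 h2) !scale0r !addr0.
    by case: (F2_cases p1`_0) p0 => ->; case: (F2_cases q1`_0) q0 => -> //; rewrite eqxx.
    by move: st2; rewrite (ar_pred1 h sp1) mul1n addnK.
  by move: st1; rewrite (ar_pred1 h sq1) mul1n addnK.
have both r : (r < c)%N -> t`_(c + r) = 0 /\ t`_r = 0.
  move=> hr; apply: (F2_det _ _ _ (C1 r hr) (C2 r hr)).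
  - rewrite -negb_and; apply/negP => /andP[/eqP a /eqP b]; move/eqP: q1n0; apply.
    by rewrite dq1 a b scale0r addr0.
  - rewrite -negb_and; apply/negP => /andP[/eqP a /eqP b]; move/eqP: p1n0; apply.
    by rewrite dp1 a b scale0r addr0.
  - rewrite -negb_and; apply/negP => /andP[/eqP a /eqP b]; move/eqP: p1q1; apply.
    by rewrite dp1 dq1 a b.
case: (ltnP i c) => h1; first by case: (both i h1).
case: (ltnP i (c + c)) => h2.
  by rewrite -(subnKC h1); case: (both (i - c)%N (ar_sub2 h1 h2)).
case: (ltnP i k) => h3.
  by case: (ar_last h2 h3) => a1 a2; have := Hs _ a1; rewrite a2.
by apply: nth_default; apply: leq_trans st h3.
Qed.

Section Cons.
Variables n k c : nat.

Definition pos (j : nat) : nat := if (j < c)%N then j else (j + c)%N.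

Definition iotp (v : 'rV[F]_k) : {poly F} := \sum_(j < k) v 0 j *: 'X^(pos j).

Lemma iotp_lin : linear iotp.
Proof.
move=> a u v; rewrite /iotp scaler_sumr -big_split /=; apply: eq_bigr => j _.
by rewrite !mxE scalerDl scalerA.
Qed.

Lemma pos_inj : injective pos.
Proof. move=> i j; rewrite /pos; case: ifP => hi; case: ifP => hj; lia. Qed.

Lemma coef_iotp v i : (iotp v)`_i = \sum_(j < k) v 0 j * (i == pos j)%:R.
Proof. by rewrite /iotp coef_sum; apply: eq_bigr => j _; rewrite coefZ coefXn. Qed.

Lemma coef_iotp_pos v (j : 'I_k) : (iotp v)`_(pos j) = v 0 j.
Proof.
rewrite coef_iotp (bigD1 j) //= eqxx mulr1 big1 ?addr0 // => i ne.
case: eqP => [/pos_inj E|]; last by rewrite mulr0.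
by move: ne; rewrite -(inj_eq val_inj) /= E eqxx.
Qed.

Lemma coef_iotp_out v i : (forall j : 'I_k, i != pos j) -> (iotp v)`_i = 0.
Proof. by move=> H; rewrite coef_iotp big1 // => j _; rewrite (negbTE (H j)) mulr0. Qed.

Lemma size_iotp v : (size (iotp v) <= k + c)%N.
Proof.
rewrite /iotp; apply: (leq_trans (size_sum _ _ _)); apply/bigmax_leqP => j _.
apply: (leq_trans (size_scale_leq _ _)); rewrite size_polyXn /pos.
case: ifP => _; have := ltn_ord j; lia.
Qed.

Lemma iotp_eq0 v : iotp v = 0 -> v = 0.
Proof. by move=> H; apply/rowP => j; rewrite mxE -(coef_iotp_pos v j) H coef0. Qed.

Lemma iotp_gap v i : (c <= i < c + c)%N -> (iotp v)`_i = 0.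
Proof. move=> /andP[h1 h2]; apply: coef_iotp_out => j; rewrite /pos; case: ifP => hj; apply/eqP; lia. Qed.

Definition rowat (w : 'rV[F]_n) (i : nat) : F :=
  if insub i is Some j then w 0 j else 0.

Lemma rowat_row (f : nat -> F) i : (i < n)%N -> rowat (\row_(j < n) f j) i = f i.
Proof. by move=> hi; rewrite /rowat insubT mxE. Qed.

Definition Phi (psi : {poly F}) := psi \Po 'X^c.

Definition Ebody (psi : {poly F}) (v : 'rV[F]_k) (j : nat) : F :=
  if (j < k)%N then (iotp v)`_(pos j) else (iotp v * Phi psi)`_(j - k).
Definition Emb (psi : {poly F}) (v : 'rV[F]_k) : 'rV[F]_n :=
  \row_(j < n) Ebody psi v j.

Lemma Emb_lin psi : linear (Emb psi).
Proof.
move=> a u v; apply/rowP => j; rewrite !mxE /Ebody iotp_lin.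
by case: ifP => _; rewrite ?mulrDl ?coefD ?coefZ // -scalerAl coefZ.
Qed.

HB.instance Definition _ psi := GRing.isLinear.Build F 'rV[F]_k 'rV[F]_n *:%R (Emb psi) (Emb_lin psi).

Definition U psi : {vspace 'rV[F]_n} := (linfun (Emb psi) @: fullv)%VS.


Lemma memU psi w : reflect (exists v, w = Emb psi v) (w \in U psi).
Proof.
apply: (iffP memv_imgP) => [[v _ ->]|[v ->]]; exists v; rewrite ?memvf ?lfunE //.
Qed.

Lemma rowatD (w1 w2 : 'rV[F]_n) i : rowat (w1 + w2) i = rowat w1 i + rowat w2 i.
Proof. by rewrite /rowat; case: insub => [j|]; rewrite ?mxE ?addr0. Qed.

Lemma Emb_head psi v (j : 'I_k) : (k <= n)%N -> rowat (Emb psi v) j = v 0 j.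
Proof.
move=> hkn; rewrite /Emb rowat_row; last by have := ltn_ord j; lia.
by rewrite /Ebody ltn_ord coef_iotp_pos.
Qed.

Lemma Emb_tail psi v i : (k + i < n)%N -> rowat (Emb psi v) (k + i) = (iotp v * Phi psi)`_i.
Proof. by move=> h; rewrite /Emb rowat_row // /Ebody ltnNge leq_addr /= addKn. Qed.

Lemma Emb_inj psi v : (k <= n)%N -> Emb psi v = 0 -> v = 0.
Proof.
move=> hkn H; apply/rowP => j; rewrite mxE -(Emb_head psi v j hkn) H.
by rewrite /rowat; case: insub => [?|]; rewrite ?mxE.
Qed.

Lemma dimU psi : (k <= n)%N -> \dim (U psi) = k.
Proof.
move=> hkn; rewrite /U limg_dim_eq; first by rewrite dimvf dim_matrix; lia.
apply/eqP; rewrite capfv -subv0; apply/subvP => v; rewrite memv_ker lfunE memv0 => /eqP H.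
by apply/eqP; apply: (Emb_inj hkn H).
Qed.


Lemma rowatZ a (w : 'rV[F]_n) i : rowat (a *: w) i = a * rowat w i.
Proof. by rewrite /rowat; case: insub => [j|]; rewrite ?mxE ?mulr0. Qed.

Definition firstrow (w : 'rV[F]_n) : 'rV[F]_k := \row_(j < k) rowat w j.

Lemma firstrow_lin : linear firstrow.
Proof. by move=> a u v; apply/rowP => j; rewrite !mxE rowatD rowatZ. Qed.

Definition Lsel (R : {poly F}) (m : nat) (s : nat -> nat) (w : 'rV[F]_n) : 'rV[F]_m :=
  \row_(j < m) ((iotp (firstrow w)) %/ R)`_(s j).

Lemma Lsel_lin R m s : linear (Lsel R m s).
Proof.
move=> a u v; apply/rowP => j; rewrite !mxE firstrow_lin iotp_lin.
by rewrite divpD divpZl coefD coefZ.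
Qed.

HB.instance Definition _ R m s := GRing.isLinear.Build F 'rV[F]_n 'rV[F]_m *:%R (Lsel R m s) (Lsel_lin R m s).

Lemma dim_le_sel R m s (X : {vspace 'rV[F]_n}) :
  (forall w, w \in X -> Lsel R m s w = 0 -> w = 0) -> (\dim X <= m)%N.
Proof.
move=> H.
have h0 : (X :&: lker (linfun (Lsel R m s)) = 0)%VS.
  apply/eqP; rewrite -subv0; apply/subvP => w; rewrite memv_cap memv_ker lfunE memv0.
  by case/andP => wX /eqP L0; apply/eqP; apply: H.
rewrite -(limg_dim_eq h0).
by apply: (leq_trans (dimvS (subvf _))); rewrite dimvf dim_matrix; lia.
Qed.


Lemma iotpD (u v : 'rV[F]_k) : iotp (u + v) = iotp u + iotp v.
Proof. have h := iotp_lin 1 u v. rewrite !scale1r in h. exact: h. Qed.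

Lemma size_iotPhi v (psi : {poly F}) B : (0 < B)%N -> (size psi <= B)%N ->
  (size ((iotp v * Phi psi)%R) <= k + c * B)%N.
Proof.
move=> hB hs; apply: (leq_trans (size_mul_leq _ _)).
have h1 := size_iotp v.
have h2 : (size (Phi psi) <= ((size psi).-1 * c).+1)%N.
  by have := size_comp_poly_leq psi 'X^c; rewrite size_polyXn.
have h3 : ((size psi).-1 * c <= (B.-1) * c)%N by rewrite leq_mul2r; apply/orP; right; lia.
have h4 : (B.-1 * c + c = c * B)%N by rewrite -{2}(prednK hB) mulnSr mulnC.
move: h1 h2 h3 h4; move: (size (iotp v)) (size (Phi psi)) ((size psi).-1 * c)%N (B.-1 * c)%N (c * B)%N.
move=> a b x y z; lia.
Qed.

Lemma tail_eq (p q : {poly F}) : (size p <= n - k)%N -> (size q <= n - k)%N ->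
  (forall i, (k + i < n)%N -> p`_i = q`_i) -> p = q.
Proof.
move=> hp hq H; apply/polyP => i; case: (ltnP i (n - k)) => hi.
  by apply: H; lia.
by rewrite !nth_default // ?(leq_trans hp) ?(leq_trans hq).
Qed.

Lemma firstrow_Emb (psi : {poly F}) v : (k <= n)%N -> firstrow (Emb psi v) = v.
Proof. by move=> hkn; apply/rowP => j; rewrite mxE Emb_head. Qed.

End Cons.


Section More.
Variables n k c B : nat.
Local Notation U := (U n k c).
Local Notation Emb := (Emb n c).
Local Notation iotp := (@iotp k c).

Lemma firstrowD (u v : 'rV[F]_n) : firstrow k (u + v) = firstrow k u + firstrow k v.
Proof. have h := firstrow_lin k 1 u v. rewrite !scale1r in h. exact: h. Qed.

Lemma size_tail v (psi : {poly F}) : (0 < B)%N -> (2 * k + c * B <= n)%N -> (size psi <= B)%N ->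
  (size ((iotp v * Phi c psi)%R) <= n - k)%N.
Proof.
move=> hB hn hs; apply: (leq_trans (size_iotPhi c v hB hs)).
move: hn; move: (c * B)%N => x; lia.
Qed.

Lemma capA (psi1 psi2 : {poly F}) : (0 < c)%N -> (0 < B)%N -> (2 * k + c * B <= n)%N ->
  (size psi1 <= B)%N -> (size psi2 <= B)%N -> psi1 != psi2 ->
  \dim (U psi1 :&: U psi2) = 0%N.
Proof.
move=> hc hB hn s1 s2 n12.
have kn : (k <= n)%N by move: hn; move: (c * B)%N => x; lia.
apply/eqP; rewrite dimv_eq0 -subv0; apply/subvP => w; rewrite memv_cap memv0.
case/andP => /memU[v1 ->] /memU[v2 e].
have v12 : v1 = v2 by rewrite -(firstrow_Emb c psi1 v1 kn) e firstrow_Emb.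
subst v1.
have P : iotp v2 * Phi c psi1 = iotp v2 * Phi c psi2.
  apply: (@tail_eq n k); [exact: size_tail | exact: size_tail | move=> i hi].
  by rewrite -(@Emb_tail n k c psi1 v2 i hi) -(@Emb_tail n k c psi2 v2 i hi) e.
have : iotp v2 * (Phi c psi1 - Phi c psi2) = 0 by rewrite mulrBr P subrr.
move/eqP; rewrite /Phi -comp_polyB mulf_eq0 (negbTE (compXn_neq0 hc _)) ?subr_eq0 // orbF.
by move=> /eqP /iotp_eq0 ->; rewrite raddf0.
Qed.

Lemma capB (psi1 psi2 psi3 : {poly F}) : (0 < c)%N -> (3 * c <= k)%N -> (0 < B)%N ->
  (2 * k + c * B <= n)%N ->
  (size psi1 <= B)%N -> (size psi2 <= B)%N -> (size psi3 <= B)%N ->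
  psi1 != psi2 -> psi2 != psi3 -> psi1 != psi3 ->
  (\dim ((U psi1 + U psi2) :&: U psi3) <= k - 2 * c)%N.
Proof.
move=> hc hk hB hn s1 s2 s3 n12 n23 n13.
have kn : (k <= n)%N by move: hn; move: (c * B)%N => x; lia.
set p := psi1 - psi3; set q := psi3 - psi2.
have pn0 : p != 0 by rewrite subr_eq0.
have qn0 : q != 0 by rewrite subr_eq0 eq_sym.
have pq : p != q.
  apply: contraNneq n12 => e; rewrite -subr_eq0.
  have -> : psi1 - psi2 = (p - q) + (psi3 + psi3) - (psi2 + psi2) by rewrite /p /q; ring.
  by rewrite e subrr !polyF2_addxx add0r oppr0.
apply: (@dim_le_sel n k c ((p %/ gcdp p q + q %/ gcdp p q) \Po 'X^c) (k - 2 * c)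
          (sel c (p %/ gcdp p q) (q %/ gcdp p q))).
move=> w /memv_capP[/memv_addP[u1 /memU[v1 ->] [u2 /memU[v2 ->] ->]] /memU[v3 e3]] L0.
have v3e : v3 = v1 + v2.
  by rewrite -(firstrow_Emb c psi3 v3 kn) -e3 firstrowD !firstrow_Emb.
have E0 : iotp v1 * Phi c psi1 + iotp v2 * Phi c psi2 = (iotp v1 + iotp v2) * Phi c psi3.
  apply: (@tail_eq n k).
  - apply: (leq_trans (size_polyD _ _)); rewrite geq_max; apply/andP; split; exact: size_tail.
  - by rewrite -iotpD -v3e; exact: size_tail.
  move=> i hi; rewrite coefD -(@Emb_tail n k c psi1 v1 i hi) -(@Emb_tail n k c psi2 v2 i hi).
  by rewrite -rowatD e3 (@Emb_tail n k c psi3 v3 i hi) v3e iotpD.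
have E : iotp v1 * (p \Po 'X^c) = iotp v2 * (q \Po 'X^c).
  apply/eqP; rewrite -subr_eq0 /p /q !comp_polyB.
  have -> : iotp v1 * ((psi1 \Po 'X^c) - (psi3 \Po 'X^c)) - iotp v2 * ((psi3 \Po 'X^c) - (psi2 \Po 'X^c))
    = (iotp v1 * Phi c psi1 + iotp v2 * Phi c psi2) - (iotp v1 + iotp v2) * Phi c psi3.
    by rewrite /Phi; ring.
  by rewrite E0 subrr.
have gap (v : 'rV[F]_k) r : (r < c)%N -> (iotp v)`_(c + r) = 0.
  by move=> hr; apply: iotp_gap; apply/andP; split; lia.
have H : forall j, (j < k - 2 * c)%N ->
     ((iotp v1 + iotp v2) %/ ((p %/ gcdp p q + q %/ gcdp p q) \Po 'X^c))`_(sel c (p %/ gcdp p q) (q %/ gcdp p q) j) = 0.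
  move=> j hj; have := congr1 (fun r : 'rV[F]_(k - 2 * c) => r 0 (Ordinal hj)) L0.
  by rewrite !mxE /= e3 firstrow_Emb // v3e iotpD.
have [f0 f'0] := key hc hk pn0 qn0 pq (size_iotp c v1) (size_iotp c v2) (gap v1) (gap v2) E H.
by rewrite (iotp_eq0 f0) (iotp_eq0 f'0) !raddf0 addr0.
Qed.

Lemma dim3 (psi1 psi2 psi3 : {poly F}) : (0 < c)%N -> (3 * c <= k)%N -> (0 < B)%N ->
  (2 * k + c * B <= n)%N ->
  (size psi1 <= B)%N -> (size psi2 <= B)%N -> (size psi3 <= B)%N ->
  psi1 != psi2 -> psi2 != psi3 -> psi1 != psi3 ->
  (2 * k + 2 * c <= \dim (U psi1 + U psi2 + U psi3))%N.
Proof.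
move=> hc hk hB hn s1 s2 s3 n12 n23 n13.
have kn : (k <= n)%N by move: hn; move: (c * B)%N => x; lia.
have h1 := dimv_sum_cap (U psi1) (U psi2).
have h2 := dimv_sum_cap (U psi1 + U psi2) (U psi3).
have h3 := capB hc hk hB hn s1 s2 s3 n12 n23 n13.
rewrite (@dimU n k c psi1 kn) (@dimU n k c psi2 kn) (capA hc hB hn s1 s2 n12) in h1.
rewrite (@dimU n k c psi3 kn) in h2.
move: h1 h2 h3; move: (\dim (U psi1 + U psi2 + U psi3)) (\dim (U psi1 + U psi2))
  (\dim ((U psi1 + U psi2) :&: U psi3)) => a b d; lia.
Qed.
End More.

Lemma U_inj n k c B (psi1 psi2 : {poly F}) : (0 < c)%N -> (0 < k)%N -> (0 < B)%N ->
  (2 * k + c * B <= n)%N -> (size psi1 <= B)%N -> (size psi2 <= B)%N ->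
  U n k c psi1 = U n k c psi2 -> psi1 = psi2.
Proof.
move=> hc hk hB hn s1 s2 e; apply/eqP; apply/negPn/negP => n12.
have := capA hc hB hn s1 s2 n12; rewrite e capvv dimU; first by move=> k0; rewrite k0 in hk.
by move: hn; move: (c * B)%N => x; lia.
Qed.

Local Close Scope ring_scope.

Theorem mainTheorem10 (n k g : nat) :
  (0 < n)%N -> (0 < k)%N -> (0 < g)%N ->
  (3 * (g.+1 %/ 2) <= k)%N -> (2 * k + g <= n)%N ->
  B3_ge 'F_2 n k (k + g)
    (2 ^ (((n - 2 * k + 1) %/ (k + 1)) * (k %/ (g.+1 %/ 2))))%N.
Proof.
move=> hn0 hk0 hg hck hn.
set c := (g.+1 %/ 2)%N in hck *.
set B := ((n - 2 * k) %/ c)%N.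
have hc : (0 < c)%N by rewrite /c; lia.
have hgc : (g <= 2 * c)%N by rewrite /c; lia.
have hcg : (c <= g)%N by rewrite /c; lia.
have hcB : (c * B <= n - 2 * k)%N by rewrite /B mulnC leq_trunc_div.
have hnB : (2 * k + c * B <= n)%N by move: hcB hn; move: (c * B)%N => x; lia.
have hB : (0 < B)%N by rewrite /B divn_gt0 //; lia.
have hab : ((n - 2 * k + 1) %/ (k + 1) * (k %/ c) <= B)%N.
  rewrite /B leq_divRL // -mulnA.
  apply: (leq_trans (leq_mul (leqnn _) (leq_trunc_div k c))).
  have := leq_trunc_div (n - 2 * k + 1) (k + 1).
  move: ((n - 2 * k + 1) %/ (k + 1))%N => a.
  case: a => [|a]; first by rewrite mul0n.
  rewrite !mulSn mulnDr muln1; move: (a * k)%N => x; lia.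
exists [seq U n k c (val psi) | psi <- enum {poly_B F}].
split; last first.
  rewrite size_map -cardT card_npoly card_Fp //.
  by rewrite leq_pexp2l.
have kn : (k <= n)%N by lia.
split.
  rewrite map_inj_uniq ?enum_uniq // => psi1 psi2 e; apply: val_inj.
  exact: (U_inj hc hk0 hB hnB (size_npoly psi1) (size_npoly psi2) e).
split.
  by move=> V /mapP[psi _ ->]; rewrite dimU.
move=> V1 V2 V3 /mapP[psi1 _ ->] /mapP[psi2 _ ->] /mapP[psi3 _ ->] n12 n23 n13.
have ne (a b : {poly_B F}) : U n k c (val a) != U n k c (val b) -> val a != val b.
  by apply: contraNneq => ->.
apply: leq_trans (dim3 hc hck hB hnB (size_npoly psi1) (size_npoly psi2) (size_npoly psi3)
   (ne _ _ n12) (ne _ _ n23) (ne _ _ n13)).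
lia.
Qed.
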